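(* Let $\mathcal{X}$ be a compact subset of $\mathbb{R}^{Jd}$, $M$ a Borel probability distribution on $\mathcal{X}$, $G_0\in\mathbb{P}$ and $\Pi$ a prior on $\mathbb{P}$. Suppose $G_0$ lies in the weak support of $\Pi$ and $q_j(\mathbf{x};G_0)>0$ for every $j\in\{1,\dots,J\}$ and every $\mathbf{x}\in\mathcal{X}$. Then $G_0$ is in the Kullback–Leibler support of $\Pi$, i.e. for every $\epsilon>0$, $\Pi\{G\in\mathbb{P}: \int_{\mathcal{X}}K(G_0,G\mid\mathbf{x})M(\mathrm{d}\mathbf{x})<\epsilon\}>0$.
   Context: Fix integers $J\ge2$, $d\ge1$, $\mathbf{C}=\{1,\dots,J\}$. Write $\mathbf{x}=(\mathbf{x}_1,\dots,\mathbf{x}_J)$ with $\mathbf{x}_j\in\mathbb{R}^d$ and $k_j(\mathbf{x},\boldsymbol\beta)=\exp(\mathbf{x}_j'\boldsymbol\beta)/\sum_{l\in\mathbf{C}}\exp(\mathbf{x}_l'\boldsymbol\beta)$. $\mathbb{P}$ is the space of Borel probability measures on $\mathbb{R}^d$ with the weak topology; $q_j(\mathbf{x};G)=\int k_j(\mathbf{x},\boldsymbol\beta)G(\mathrm{d}\boldsymbol\beta)$. $G_0$ is in the weak support of $\Pi$ if every weak neighborhood of $G_0$ has positive $\Pi$-probability. $K(G_0,G\mid\mathbf{x})=\sum_{j\in\mathbf{C}}q_j(\mathbf{x};G_0)\log[q_j(\mathbf{x};G_0)/q_j(\mathbf{x};G)]$. *)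

(* Defs.v *)
From HB Require Import structures.
From mathcomp Require Import all_boot all_order all_algebra.
From mathcomp Require Import all_classical all_reals all_analysis.
Set Implicit Arguments. Unset Strict Implicit. Unset Printing Implicit Defensive.
Import Order.TTheory GRing.Theory Num.Theory.
Import numFieldNormedType.Exports.
Local Open Scope classical_set_scope.
Local Open Scope ring_scope.

(* R^d, represented as row vectors 'rV[R]_d, with the Borel sigma-algebra
   (generated by the open sets of the Euclidean = product topology). *)
Definition Rd (R : realType) (d : nat) :=
  g_sigma_algebraType (@open 'rV[R]_d).

(* R^{Jd}: x = (x_1,...,x_J) with x_j in R^d, represented as a J x d matrix
   whose j-th row is x_j; Borel sigma-algebra. *)
Definition RJd (R : realType) (J d : nat) :=
  g_sigma_algebraType (@open 'M[R]_(J, d)).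

Definition Pspace (R : realType) (d : nat) := probability (Rd R d) R.

Definition Gint (R : realType) (d : nat) (G : Pspace R d) (f : 'rV[R]_d -> R) : R :=
  fine (\int[G]_(b in [set: Rd R d]) (f b)%:E)%E.

Definition bounded_continuous (R : realType) (d : nat) (f : 'rV[R]_d -> R) :=
  continuous f /\ exists c : R, forall b, `|f b| <= c.

Definition weak_open (R : realType) (d : nat) (U : set (Pspace R d)) : Prop :=
  forall G, U G ->
    exists (n : nat) (f : 'I_n -> 'rV[R]_d -> R) (e : R),
      0 < e /\ (forall i, bounded_continuous (f i)) /\
      [set G' : Pspace R d | forall i, `|Gint G' (f i) - Gint G (f i)| < e]
        `<=` U.

Definition PB (R : realType) (d : nat) :=
  g_sigma_algebraType (@weak_open R d).

Definition xb (R : realType) (J d : nat) (x : 'M[R]_(J, d)) (j : 'I_J)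
  (b : 'rV[R]_d) : R := \sum_(i < d) x j i * b 0 i.

Definition kfun (R : realType) (J d : nat) (x : 'M[R]_(J, d)) (b : 'rV[R]_d)
  (j : 'I_J) : R :=
  expR (xb x j b) / \sum_(l < J) expR (xb x l b).

Definition qfun (R : realType) (J d : nat) (x : 'M[R]_(J, d)) (G : Pspace R d)
  (j : 'I_J) : R :=
  Gint G (fun b => kfun x b j).

Definition KLx (R : realType) (J d : nat) (G0 G : Pspace R d) (x : 'M[R]_(J, d)) : R :=
  \sum_(j < J) qfun x G0 j * ln (qfun x G0 j / qfun x G j).

(* Main.v *)
Require Import Defs.
From HB Require Import structures.
From mathcomp Require Import all_boot all_order all_algebra.
From mathcomp Require Import all_classical all_reals all_analysis.
From mathcomp Require Import lra ring.
Import Order.TTheory GRing.Theory Num.Theory.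
Import numFieldNormedType.Exports.
Local Open Scope classical_set_scope.
Local Open Scope ring_scope.


Section GintSec.
Variables (R : realType) (d : nat).
Implicit Types (G : Pspace R d) (f g : 'rV[R]_d -> R).

Definition bmf f := measurable_fun (setT : set (Rd R d)) f /\ exists c : R, forall b, `|f b| <= c.

Lemma cont_meas f : continuous f -> measurable_fun (setT : set (Rd R d)) f.
Proof.
move=> /continuousP cf; apply: (measurability _ (measurable_realfun.RGenOpens.measurableE R)).
move=> _ [_ [a [b ->] <-]]; rewrite setTI; apply: sub_sigma_algebra.
exact/cf/interval_open.
Qed.

Lemma PsetT G : G [set: Rd R d] = 1%E.
Proof. exact: probability_setT. Qed.

Lemma bmf_int G f : bmf f -> G.-integrable setT (EFin \o f).
Proof.
move=> [mf [c hc]]; apply: measurable_bounded_integrable => //.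
  exact: (le_lt_trans (probability_le1 _ _) (ltry 1)).
exists c; split; first by rewrite num_real.
move=> x cx y _; exact: le_trans (hc y) (ltW cx).
Qed.

Lemma GintE G f : Gint G f = (\int[G]_(x in setT) f x)%R.
Proof. by []. Qed.

Lemma GintD G f g : bmf f -> bmf g -> Gint G (f \+ g) = Gint G f + Gint G g.
Proof. by move=> bf bg; rewrite !GintE RintegralD //; apply: bmf_int. Qed.

Lemma GintB G f g : bmf f -> bmf g -> Gint G (f \- g) = Gint G f - Gint G g.
Proof. by move=> bf bg; rewrite !GintE RintegralB //; apply: bmf_int. Qed.

Lemma GintZ G (r : R) f : bmf f -> Gint G (fun b => r * f b) = r * Gint G f.
Proof. by move=> bf; rewrite !GintE RintegralZl //; apply: bmf_int. Qed.

Lemma Gint_cst G (r : R) : Gint G (fun=> r) = r.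
Proof. rewrite GintE Rintegral_cst // (_ : fine _ = 1) ?mulr1 //; exact: (congr1 fine (PsetT G)). Qed.

Lemma Gint_le G f g : bmf f -> bmf g -> (forall b, f b <= g b) -> Gint G f <= Gint G g.
Proof. by move=> bf bg fg; rewrite !GintE le_Rintegral //; apply: bmf_int. Qed.

Lemma Gint_indic G (A : set (Rd R d)) : measurable A -> Gint G (\1_A) = fine (G A).
Proof. by move=> mA; rewrite /Gint integral_indic // setIT. Qed.

Lemma bmf_cst (r : R) : bmf (fun=> r).
Proof. by split => //; exists `|r|. Qed.

Lemma bmf_indic (A : set (Rd R d)) : measurable A -> bmf (\1_A).
Proof.
move=> mA; split; first exact: measurable_realfun.measurable_indic.
by exists 1 => b; rewrite /indic; case: (b \in A); rewrite ?normr1 ?normr0.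
Qed.

Lemma bmfD f g : bmf f -> bmf g -> bmf (f \+ g).
Proof.
move=> [mf [c hc]] [mg [e he]]; split; first exact: measurable_realfun.measurable_funD.
by exists (c + e) => b; rewrite (le_trans (ler_normD _ _)) // lerD.
Qed.

Lemma bmfB f g : bmf f -> bmf g -> bmf (f \- g).
Proof.
move=> [mf [c hc]] [mg [e he]]; split; first exact: measurable_realfun.measurable_funB.
by exists (c + e) => b; rewrite (le_trans (ler_normB _ _)) // lerD.
Qed.

Lemma bmfM f g : bmf f -> bmf g -> bmf (f \* g).
Proof.
move=> [mf [c hc]] [mg [e he]]; split; first exact: measurable_realfun.measurable_funM.
exists (c * e) => b; rewrite normrM ler_pM //.
Qed.

Lemma bc_bmf f : bounded_continuous f -> bmf f.
Proof. by move=> [cf hc]; split => //; exact: cont_meas. Qed.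

End GintSec.

Section Ksec.
Variables (R : realType) (J d : nat).
Implicit Types (x y : 'M[R]_(J, d)) (b : 'rV[R]_d).

Lemma mx_entry_le m n (A : 'M[R]_(m, n)) i j : `|A i j| <= `|A|.
Proof.
rewrite (_ : `|A| = mx_norm A) // mx_normrE; apply/bigmax_geP; right => /=.
by exists (i, j).
Qed.

Lemma sum_exp_gt0 x b : 0 < \sum_(l < J) expR (xb x l b) -> True.
Proof. by []. Qed.

Lemma xb_bound x b j : `|xb x j b| <= d%:R * (`|x| * `|b|).
Proof.
rewrite /xb (le_trans (ler_norm_sum _ _ _)) //.
rewrite (_ : d%:R * _ = \sum_(i < d) (`|x| * `|b|)); last by rewrite sumr_const card_ord mulr_natl.
rewrite ler_sum // => i _.
by rewrite normrM ler_pM //; exact: mx_entry_le.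
Qed.

Lemma xb_diff x y b j : `|xb x j b - xb y j b| <= d%:R * (`|x - y| * `|b|).
Proof.
rewrite /xb -sumrB (le_trans (ler_norm_sum _ _ _)) //.
rewrite (_ : d%:R * _ = \sum_(i < d) (`|x - y| * `|b|)); last by rewrite sumr_const card_ord mulr_natl.
rewrite ler_sum // => i _.
rewrite -mulrBl normrM ler_pM //.
  by apply: le_trans (mx_entry_le _ _ (x - y) j i); rewrite !mxE.
exact: mx_entry_le.
Qed.

Lemma kfun_gt0 x b j : 0 < kfun x b j.
Proof.
rewrite /kfun divr_gt0 ?expR_gt0 //.
by rewrite (bigD1 j) //= ltr_pwDl ?expR_gt0 ?sumr_ge0 // => l _; rewrite expR_ge0.
Qed.

Lemma kfun_le1 x b j : kfun x b j <= 1.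
Proof.
have hs : 0 < \sum_(l < J) expR (xb x l b).
  by rewrite (bigD1 j) //= ltr_pwDl ?expR_gt0 ?sumr_ge0 // => l _; rewrite expR_ge0.
rewrite /kfun ler_pdivrMr // mul1r (bigD1 j) //= lerDl sumr_ge0 // => l _; rewrite expR_ge0.
Qed.

Lemma kfun_ratio x y b j (t : R) :
  (forall l, `|xb x l b - xb y l b| <= t) ->
  expR (- (t + t)) * kfun y b j <= kfun x b j.
Proof.
move=> ht.
have hs z : 0 < \sum_(l < J) expR (xb z l b).
  by rewrite (bigD1 j) //= ltr_pwDl ?expR_gt0 ?sumr_ge0 // => l _; rewrite expR_ge0.
rewrite /kfun.
have e1 : expR (- t) * expR (xb y j b) <= expR (xb x j b).
  rewrite -expRD ler_expR; have := ht j; rewrite ler_norml => /andP[h1 h2].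
  lra.
have e2 : \sum_(l < J) expR (xb x l b) <= expR t * \sum_(l < J) expR (xb y l b).
  rewrite mulr_sumr ler_sum // => l _; rewrite -expRD ler_expR.
  have := ht l; rewrite ler_norml => /andP[h1 h2].
  lra.
set A := expR (xb x j b) in e1 *; set B := expR (xb y j b) in e1 *.
set S := \sum_(l < J) expR (xb x l b) in e2 *.
set T := \sum_(l < J) expR (xb y l b) in e2 *.
have hS : 0 < S := hs x.
have hT : 0 < T := hs y.
rewrite ler_pdivlMr //.
apply: le_trans e1.
apply: (le_trans (y := expR (- (t + t)) * (B / T) * (expR t * T))).
  apply: ler_wpM2l => //.
  by rewrite mulr_ge0 ?expR_ge0 // divr_ge0 ?expR_ge0 // ltW.
have hE : expR t != 0 by rewrite gt_eqF ?expR_gt0.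
rewrite le_eqVlt; apply/orP; left; apply/eqP.
rewrite opprD expRD !expRN; field.
by rewrite hE gt_eqF.
Qed.

Lemma xb_cont x j : continuous (xb x j).
Proof.
rewrite /xb; apply: continuous_big => //.
  exact: add_continuous.
move=> i _ b; apply: continuousM; first exact: cst_continuous.
exact: (@coord_continuous R 1 d 0 i).
Qed.

Lemma kfun_cont x j : continuous (fun b => kfun x b j).
Proof.
move=> b; rewrite /kfun; apply: (continuousM (s := fun c => expR (xb x j c)) (t := fun c => (\sum_(l < J) expR (xb x l c))^-1)).
  exact: (continuous_comp (xb_cont x j b) (@continuous_expR R _)).
apply: continuousV.
  rewrite gt_eqF //.
  by rewrite (bigD1 j) //= ltr_pwDl ?expR_gt0 ?sumr_ge0 // => l _; rewrite expR_ge0.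
apply: continuous_big => //.
  exact: add_continuous.
move=> l _ c; exact: (continuous_comp (xb_cont x l c) (@continuous_expR R _)).
Qed.

End Ksec.

Section Phi.
Variables (R : realType) (d : nat).
Definition phi (r : R) (b : 'rV[R]_d) : R := Num.min 1 (Num.max 0 (r + 1 - `|b|)).

Lemma phi_ge0 r b : 0 <= phi r b.
Proof. by rewrite /phi le_min ler01 le_max lexx. Qed.

Lemma phi_le1 r b : phi r b <= 1.
Proof. by rewrite /phi ge_min lexx. Qed.

Lemma phi_one r b : `|b| <= r -> phi r b = 1.
Proof. move=> h; rewrite /phi; apply/min_idPl; rewrite le_max; apply/orP; right; lra. Qed.

Lemma phi_supp r b : 0 < phi r b -> `|b| < r + 1.
Proof.
rewrite /phi lt_min => /andP[_]; rewrite lt_max ltxx /=; lra.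
Qed.

Lemma phi_cont r : continuous (phi r).
Proof.
move=> b; apply: (continuous_min (f := fun=> 1) (g := fun c => Num.max 0 (r + 1 - `|c|))).
  exact: cst_continuous.
apply: (continuous_max (f := fun=> 0) (g := fun c => r + 1 - `|c|)).
  exact: cst_continuous.
apply: continuousB; first exact: cst_continuous.
exact: norm_continuous.
Qed.
End Phi.

Section Tight.
Variables (R : realType) (d : nat).

Definition Bn (n : nat) : set (Rd R d) := [set b : 'rV[R]_d | `|b| <= n%:R].

Lemma Bn_meas n : measurable (Bn n).
Proof.
rewrite -(setCK (Bn n)); apply: measurableC; apply: sub_sigma_algebra.
have -> : ~` Bn n = (fun b : 'rV[R]_d => `|b|) @^-1` [set x | n%:R < x].
  by apply/seteqP; split => b /=; rewrite /Bn /= => h; [rewrite ltNge; apply/negP|rewrite leNgt h].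
apply: (continuousP _).1; first exact: norm_continuous.
exact: open_gt.
Qed.

Lemma tight (G : Pspace R d) (e : R) : 0 < e ->
  exists n : nat, 1 - e < fine (G (Bn n)).
Proof.
move=> e0.
have hcv : (G \o Bn) n @[n --> \oo] --> G (\bigcup_n Bn n).
  apply: nondecreasing_cvg_mu => //.
  - exact: Bn_meas.
  - by apply: bigcup_measurable => n _; exact: Bn_meas.
  - move=> m n mn; apply/subsetPset => b; rewrite /Bn /= => h; apply: le_trans h _.
    by rewrite ler_nat.
have hU : \bigcup_n Bn n = setT.
  apply/seteqP; split => // b _; exists (Num.truncn `|b|).+1 => //.
  by rewrite /Bn /= ltW // truncnS_gt.
have h1 : G (\bigcup_n Bn n) = 1%E by rewrite hU; exact: probability_setT.
move: hcv; rewrite h1.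
move=> /fine_cvgP [_ hcv].
have := cvgr_gt _ hcv (1 - e) ltac:(lra).
move=> [N _ hN]; exists N; exact: (hN N (leqnn N)).
Qed.
End Tight.

Section WO.
Variables (R : realType) (d : nat).

Lemma nbhd_open (G0 : Pspace R d) n (f : 'I_n -> 'rV[R]_d -> R) (e : R) :
  0 < e -> (forall i, bounded_continuous (f i)) ->
  weak_open [set G' : Pspace R d | forall i, `|Gint G' (f i) - Gint G0 (f i)| < e].
Proof.
move=> e0 hf G /= hG.
pose m := \big[Num.max/0]_(i < n) `|Gint G (f i) - Gint G0 (f i)|.
have hm : m < e by apply: bigmax_lt.
have hmi i : `|Gint G (f i) - Gint G0 (f i)| <= m.
  exact: (le_bigmax 0 (fun i => `|Gint G (f i) - Gint G0 (f i)|) i).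
exists n, f, (e - m); split; first by rewrite subr_gt0.
split => // G' /= hG' i.
have := hG' i; have := hmi i.
have -> : Gint G' (f i) - Gint G0 (f i) =
  (Gint G' (f i) - Gint G (f i)) + (Gint G (f i) - Gint G0 (f i)) by ring.
move=> h1 h2; apply: le_lt_trans (ler_normD _ _) _; lra.
Qed.
End WO.

Section Cpt.
Variables (R : realType) (J d : nat).

Lemma cpt_bound (X : set 'M[R]_(J, d)) : compact X ->
  exists L : R, 0 < L /\ forall x, X x -> `|x| <= L.
Proof.
move=> /compact_bounded [M [Mreal hM]].
exists (`|M| + 1); split; first by rewrite ltr_pwDr // normr_ge0.
move=> x Xx; apply: (hM (`|M| + 1)) => //.
by rewrite (le_lt_trans (ler_norm M)) // ltrDl.
Qed.

Lemma cpt_net (X : set 'M[R]_(J, d)) (eta : R) : compact X -> 0 < eta ->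
  exists s : seq 'M[R]_(J, d), forall x, X x -> exists2 y, y \in s & `|y - x| < eta.
Proof.
move=> cX eta0; move: cX; rewrite compact_cover => /(_ _ X (fun y => ball y eta)).
case.
- by move=> i _; exact: ball_open.
- by move=> x Xx; exists x => //; exact: ballxx.
move=> D' _ hD'; exists (finmap.enum_fset D') => x /hD' [y /= yD' hy]; exists y => //.
by move: hy; rewrite -ball_normE.
Qed.
End Cpt.

Section IntB.
Local Open Scope ereal_scope.
Lemma int_le_cst d (T : measurableType d) (R : realType) (mu : {measure set T -> \bar R})
  (X : set T) (mX : measurable X) (f : T -> R) (c : R) :
  (0 <= c)%R -> (forall x, X x -> (f x <= c)%R) ->
  \int[mu]_(x in X) (f x)%:E <= \int[mu]_(x in X) c%:E.
Proof.
move=> c0 hf.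
rewrite integralE.
apply: (le_trans (y := \int[mu]_(x in X) ((fun x => (f x)%:E)^\+ x))).
  rewrite -[leRHS]sube0; apply: leeB => //; apply: integral_ge0 => x _; exact: funeneg_ge0.
rewrite ge0_integralE; last by move=> x _; exact: funepos_ge0.
rewrite ge0_integralE; last by move=> x _; rewrite lee_fin.
apply: ereal_sup_le => _ [h hh <-]; exists h => //= x.
apply: le_trans (hh x) _.
rewrite /patch; case: ifPn => // xX.
rewrite funeposE /= ge_max; apply/andP; split; rewrite lee_fin //; apply: hf.
by move: xX; rewrite inE.
Qed.
End IntB.

Section Core.
Local Close Scope ereal_scope.
Variables (R : realType) (J d : nat).

Lemma bmf_k (x : 'M[R]_(J, d)) j : bmf R d (fun b => kfun x b j).
Proof.
apply: bc_bmf; split; first exact: kfun_cont.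
exists 1 => b; rewrite ger0_norm ?kfun_le1 //; exact/ltW/kfun_gt0.
Qed.

Lemma bmf_phi (r : R) : bmf R d (phi R d r).
Proof.
apply: bc_bmf; split; first exact: phi_cont.
exists 1 => b; rewrite ger0_norm ?phi_le1 ?phi_ge0 //.
Qed.

Lemma bmf_kphi (x : 'M[R]_(J, d)) j r : bmf R d (fun b => kfun x b j * phi R d r b).
Proof. exact: (@bmfM R d _ _ (bmf_k x j) (bmf_phi r)). Qed.

Lemma bc_kphi (x : 'M[R]_(J, d)) j r : bounded_continuous (fun b => kfun x b j * phi R d r b).
Proof.
split.
  move=> b; apply: (continuousM (s := fun b => kfun x b j) (t := phi R d r)).
    exact: kfun_cont.
  exact: phi_cont.
exists 1 => b.
have := kfun_gt0 _ _ _ x b j; have := kfun_le1 _ _ _ x b j; have := phi_ge0 _ _ r b; have := phi_le1 _ _ r b.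
move=> h1 h2 h3 h4; rewrite ger0_norm; [apply: mulr_ile1; lra | apply: mulr_ge0; lra].
Qed.

Lemma Gint_phi_ge (G : Pspace R d) (n : nat) :
  fine (G (Bn R d n)) <= Gint G (phi R d n%:R).
Proof.
rewrite -(Gint_indic _ _ G _ (Bn_meas R d n)).
apply: Gint_le; [exact: @bmf_indic R d _ (Bn_meas _ _ _)| exact: bmf_phi|].
move=> b; rewrite indicE; have [hb|hb] := boolP (b \in Bn R d n).
  by rewrite phi_one //; move: hb; rewrite inE.
exact: phi_ge0.
Qed.

Lemma core (G0 G : Pspace R d) (x y : 'M[R]_(J, d)) (j : 'I_J) (r g e : R) :
  0 <= g ->
  (forall b, g * (kfun y b j * phi R d r b) <= kfun x b j * phi R d r b) ->
  (forall b, g * (kfun x b j * phi R d r b) <= kfun y b j * phi R d r b) ->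
  `|Gint G (fun b => kfun y b j * phi R d r b) - Gint G0 (fun b => kfun y b j * phi R d r b)| < e ->
  1 - e < Gint G0 (phi R d r) ->
  g * (g * (qfun x G0 j - e) - e) <= qfun x G j.
Proof.
move=> g0 h1 h2 hG hphi.
set kx := (fun b => kfun x b j * phi R d r b) in h1 h2 *.
set ky := (fun b => kfun y b j * phi R d r b) in h1 h2 hG *.
have s1 : Gint G kx <= qfun x G j.
  apply: Gint_le; [exact: bmf_kphi|exact: bmf_k|] => b.
  rewrite /kx ler_piMr ?phi_le1 //; exact/ltW/kfun_gt0.
have s2 : g * Gint G ky <= Gint G kx.
  rewrite -GintZ; last exact: bmf_kphi.
  apply: Gint_le => //; [|exact: bmf_kphi].
  by apply: bmfM; [exact: bmf_cst|exact: bmf_kphi].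
have s3 : g * Gint G0 kx <= Gint G0 ky.
  rewrite -GintZ; last exact: bmf_kphi.
  apply: Gint_le => //; [|exact: bmf_kphi].
  by apply: bmfM; [exact: bmf_cst|exact: bmf_kphi].
have s4 : qfun x G0 j - (1 - Gint G0 (phi R d r)) <= Gint G0 kx.
  have e1 := GintB _ _ G0 _ _ (bmf_cst R d 1) (bmf_phi r).
  rewrite Gint_cst in e1; rewrite -e1.
  have e2 := GintB _ _ G0 _ _ (bmf_k x j) (bmfB _ _ _ _ (bmf_cst R d 1) (bmf_phi r)).
  rewrite /qfun -e2.
  apply: Gint_le; [exact: (bmfB _ _ _ _ (bmf_k x j) (bmfB _ _ _ _ (bmf_cst R d 1) (bmf_phi r)))|exact: bmf_kphi|].
  move=> b /=; rewrite /kx -subr_ge0.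
  rewrite (_ : _ - _ = (1 - kfun x b j) * (1 - phi R d r b)); last by ring.
  by apply: mulr_ge0; rewrite subr_ge0 ?kfun_le1 ?phi_le1.
clearbody kx ky; clear h1 h2.
move: (Gint G0 ky) (Gint G ky) (Gint G0 kx) (Gint G kx) (qfun x G0 j) (qfun x G j) (Gint G0 (phi R d r)) hG s1 s2 s3 s4 hphi.
move=> a b c c' q0 q p; rewrite ltr_norml => /andP[hb1 hb2] s1 s2 s3 s4 hp.
have s5 : a - e <= b by lra.
have t1 : g * (q0 - e) <= a.
  apply: le_trans s3; apply: ler_wpM2l => //; lra.
have t2 : g * (g * (q0 - e) - e) <= g * b.
  apply: ler_wpM2l => //; lra.
apply: le_trans t2 _; apply: le_trans s2 _; exact: s1.
Qed.

End Core.

Section Core2.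
Variables (R : realType) (J d : nat).

Lemma kfun_lb (x : 'M[R]_(J, d)) b j (t : R) : (forall l, `|xb x l b| <= t) ->
  expR (- (t + t)) / J%:R <= kfun x b j.
Proof.
move=> ht.
have h0 : forall l, xb (0 : 'M[R]_(J, d)) l b = 0.
  by move=> l; rewrite /xb big1 // => i _; rewrite mxE mul0r.
have hk0 : kfun (0 : 'M[R]_(J, d)) b j = J%:R^-1.
  rewrite /kfun (eq_bigr (fun _ => 1)); last by move=> l _; rewrite h0 expR0.
  by rewrite h0 expR0 sumr_const card_ord div1r.
rewrite -hk0; apply: kfun_ratio => l; rewrite h0 subr0; exact: ht.
Qed.

Lemma q_lb (G : Pspace R d) (x : 'M[R]_(J, d)) j (L : R) (n : nat) :
  0 <= L -> `|x| <= L ->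
  expR (- (d%:R * (L * n%:R) + d%:R * (L * n%:R))) / J%:R * fine (G (Bn R d n)) <= qfun x G j.
Proof.
move=> L0 hx.
set c := expR _ / J%:R.
rewrite -(Gint_indic _ _ G _ (Bn_meas R d n)) -GintZ; last exact: (bmf_indic _ _ _ (Bn_meas R d n)).
apply: Gint_le.
- apply: (bmfM _ _ _ _ (bmf_cst R d c) (bmf_indic _ _ _ (Bn_meas R d n))).
- exact: bmf_k.
move=> b; rewrite indicE; have [hb|hb] := boolP (b \in Bn R d n).
  rewrite mulr1; apply: kfun_lb => l.
  apply: le_trans (xb_bound _ _ _ x b l) _.
  move: hb; rewrite inE /Bn /= => hb.
  apply: ler_wpM2l => //; apply: ler_pM => //.
rewrite mulr0; exact/ltW/kfun_gt0.
Qed.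
End Core2.
Lemma arith (R : realType) (g th th' q0 m del : R) : 0 <= g -> g <= 1 -> g * g = th' -> th' = (1 + th) / 2 ->
  th < 1 -> 0 < m -> m <= q0 -> del = (1 - th) * m / 8 ->
  th * q0 <= g * (g * (q0 - del) - del).
Proof.
move=> g0 g1 hg ht th1 m0 mq hd.
have d0 : 0 <= del by rewrite hd; apply: divr_ge0 => //; apply: mulr_ge0; lra.
have e1 : g * (g * (q0 - del) - del) = th' * q0 - th' * del - g * del.
  by rewrite -hg; ring.
rewrite e1.
have h1 : g * del <= del by rewrite ler_piMl.
have th'1 : th' <= 1 by rewrite ht; lra.
have h2 : th' * del <= del by rewrite ler_piMl // ht; lra.
have h3 : (th' - th) * m <= (th' - th) * q0 by rewrite ler_wpM2l // ht; lra.
have h4 : (th' - th) * m = 4 * del by rewrite hd ht; field.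
lra.
Qed.


Theorem lemma2 (R : realType) (J d : nat) (hJ : (2 <= J)%N) (hd : (1 <= d)%N)
  (X : set 'M[R]_(J, d)) (hX : compact X)
  (M : probability (RJd R J d) R) (hM : M X = 1%E)
  (G0 : Pspace R d) (Pi : probability (PB R d) R)
  (hsupp : forall U : set (Pspace R d), weak_open U -> U G0 -> (0 < Pi U)%E)
  (hpos : forall (j : 'I_J) (x : 'M[R]_(J, d)), X x -> 0 < qfun x G0 j) :
  forall eps : R, 0 < eps ->
    exists A : set (PB R d),
      measurable A /\
      A `<=` [set G : Pspace R d |
                (\int[M]_(x in X) (KLx G0 G x)%:E < eps%:E)%E] /\
      (0 < Pi A)%E.
Proof.
move=> eps eps0.
have Jr0 : 0 < J%:R :> R by rewrite ltr0n; apply: leq_trans hJ.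
have dr1 : 1 <= d%:R :> R by rewrite ler1n.
set c := eps / (J%:R + J%:R).
have c0 : 0 < c by rewrite divr_gt0 // addr_gt0.
set th := expR (- c).
have th0 : 0 < th by exact: expR_gt0.
have th1 : th < 1 by rewrite expR_lt1; lra.
set th' := (1 + th) / 2.
have [L [L0 hL]] := cpt_bound _ _ _ _ hX.
have h12 : 0 < 1 / 2 :> R by lra.
have [n0 hn0] := tight _ _ G0 _ h12.
set t0 := d%:R * (L * n0%:R).
set m := expR (- (t0 + t0)) / J%:R * (1 / 2).
have m0 : 0 < m by rewrite mulr_gt0 // divr_gt0 // expR_gt0.
have hm : forall x j, X x -> m <= qfun x G0 j.
  move=> x j Xx; apply: le_trans (q_lb _ _ _ G0 x j L n0 (ltW L0) (hL x Xx)).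
  rewrite ler_wpM2l //; move: hn0; move: (fine _) => z; lra.
set del := (1 - th) * m / 8.
have del0 : 0 < del by rewrite divr_gt0 // mulr_gt0 // subr_gt0.
have [n1 hn1] := tight _ _ G0 _ del0.
set r := n1%:R : R.
have r0 : 0 <= r by rewrite ler0n.
have hphi : 1 - del < Gint G0 (phi R d r).
  exact: lt_le_trans hn1 (Gint_phi_ge _ _ G0 n1).
have th'0 : 0 < th' by rewrite /th'; lra.
have th'1 : th' < 1 by rewrite /th'; lra.
set t := - ln th' / 4.
have t0' : 0 < t.
  rewrite /t divr_gt0 // oppr_gt0.
  by rewrite -(expRK 0) expR0 ltr_ln ?posrE.
set g := expR (- (t + t)).
have gg : g * g = th'.
  rewrite /g -expRD (_ : - (t + t) + - (t + t) = ln th'); last by rewrite /t; field.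
  by rewrite lnK // posrE.
have g0 : 0 <= g by exact: expR_ge0.
have g1 : g <= 1 by rewrite expR_le1; lra.
set eta := t / (d%:R * (r + 1)).
have eta0 : 0 < eta by rewrite divr_gt0 // mulr_gt0 //; lra.
have [s hs] := cpt_net _ _ _ _ _ hX eta0.
pose gf := fun (p : 'I_(size s) * 'I_J) (b : 'rV[R]_d) =>
  kfun (nth 0 s p.1) b p.2 * phi R d r b.
pose U := [set G' : Pspace R d | forall i : 'I_#|{: 'I_(size s) * 'I_J}|,
  `|Gint G' (gf (enum_val i)) - Gint G0 (gf (enum_val i))| < del].
have Uo : weak_open U.
  apply: nbhd_open => // i; exact: bc_kphi.
exists U; split; first exact: sub_sigma_algebra.
split; last by apply: hsupp => // i; rewrite subrr normr0.
move=> G UG /=.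
have hq : forall x j, X x -> th * qfun x G0 j <= qfun x G j.
  move=> x j Xx.
  have [y ys hy] := hs x Xx.
  have ha : (index y s < size s)%N by rewrite index_mem.
  pose p := (Ordinal ha, j).
  have hU := UG (enum_rank p); rewrite enum_rankK in hU.
  have hy' : nth 0 s (index y s) = y := nth_index 0 ys.
  rewrite /gf /= hy' in hU.
  have hr : forall b l, 0 < phi R d r b -> `|xb x l b - xb y l b| <= t.
    move=> b l hb; apply: le_trans (xb_diff _ _ _ x y b l) _.
    have hb' := phi_supp _ _ _ _ hb.
    have hxy : `|x - y| <= eta by rewrite distrC ltW.
    apply: (le_trans (y := d%:R * (eta * (r + 1)))).
      apply: ler_wpM2l => //.
      by apply: ler_pM => //; exact: ltW.
    rewrite /eta le_eqVlt; apply/orP; left; apply/eqP; field.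
    by apply/andP; split; apply/negP => /eqP; lra.
  have h1 : forall b, g * (kfun y b j * phi R d r b) <= kfun x b j * phi R d r b.
    move=> b; have [hb|hb] := ltP 0 (phi R d r b).
      rewrite mulrA ler_wpM2r ?phi_ge0 //; apply: kfun_ratio => l; exact: hr.
    have -> : phi R d r b = 0 by apply/eqP; rewrite eq_le hb phi_ge0.
    by rewrite !mulr0.
  have h2 : forall b, g * (kfun x b j * phi R d r b) <= kfun y b j * phi R d r b.
    move=> b; have [hb|hb] := ltP 0 (phi R d r b).
      rewrite mulrA ler_wpM2r ?phi_ge0 //; apply: kfun_ratio => l.
      by rewrite distrC; exact: hr.
    have -> : phi R d r b = 0 by apply/eqP; rewrite eq_le hb phi_ge0.
    by rewrite !mulr0.
  have hc := core _ _ _ G0 G x y j r g del g0 h1 h2 hU hphi.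
  apply: le_trans hc.
  exact: (arith _ _ _ _ _ _ _ g0 g1 gg erefl th1 m0 (hm x j Xx) erefl).
have hKL : forall x, X x -> KLx G0 G x <= c * J%:R.
  move=> x Xx; rewrite /KLx.
  rewrite (_ : c * J%:R = \sum_(j < J) c); last by rewrite sumr_const card_ord mulr_natr.
  apply: ler_sum => j _.
  have q0p : 0 < qfun x G0 j := lt_le_trans m0 (hm x j Xx).
  have q01 : qfun x G0 j <= 1.
    rewrite /qfun -(Gint_cst _ _ G0 1); apply: Gint_le; [exact: bmf_k | exact: bmf_cst |].
    move=> b; exact: kfun_le1.
  have hqq := hq x j Xx.
  have qp : 0 < qfun x G j := lt_le_trans (mulr_gt0 th0 q0p) hqq.
  have hln : ln (qfun x G0 j / qfun x G j) <= c.
    rewrite -[leRHS](expRK c) ler_ln ?posrE ?divr_gt0 ?expR_gt0 //.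
    rewrite ler_pdivrMr //.
    have : expR c * (th * qfun x G0 j) <= expR c * qfun x G j by rewrite ler_wpM2l ?expR_ge0.
    by rewrite mulrA /th -expRD subrr expR0 mul1r.
  apply: (le_trans (y := qfun x G0 j * c)); first by rewrite ler_wpM2l // ltW.
  by rewrite ler_piMl // ltW.
have mX : measurable (X : set (RJd R J d)).
  rewrite -(setCK X); apply: measurableC; apply: sub_sigma_algebra.
  apply: closed_openC; apply: (compact_closed _ hX); exact: norm_hausdorff.
have hcJ : 0 <= c * J%:R by rewrite mulr_ge0 // ltW.
apply: le_lt_trans (int_le_cst _ _ _ M X mX (fun x => KLx G0 G x) (c * J%:R) hcJ hKL) _.
rewrite integral_cst //.
apply: (le_lt_trans (y := (c * J%:R)%:E)).
  rewrite le_eqVlt; apply/orP; left; apply/eqP.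
  rewrite -[X in _ = X]mule1; congr (_ * _)%E; exact: hM.
rewrite lte_fin /c.
rewrite -mulrA (_ : (J%:R + J%:R)^-1 * J%:R = 1 / 2); last by field; rewrite gt_eqF // addr_gt0.
clear -eps0; lra.
Qed.
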